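(* Let $G$ be a free group on $k\ge 2$ generators and let $m\ge 1$. Let $\Phi$ be a linear action of $G$ on $\mathbb R^m$ (i.e. each $f_g=\Phi(g,\cdot)$ is an invertible linear map of $\mathbb R^m$), where $\mathbb R^m$ carries the Euclidean metric. Then $\Phi$ does not have the shadowing property.
   Context: An action of a group $G$ on a metric space $(\Omega,\mathrm{dist})$ is a map $\Phi:G\times\Omega\to\Omega$ such that each $f_g=\Phi(g,\cdot)$ is a homeomorphism, $\Phi(e,x)=x$, and $\Phi(g_1g_2,x)=\Phi(g_1,\Phi(g_2,x))$. Fix a finite symmetric generating set $S$ of $G$ (e.g. the free generators and their inverses; the property below does not depend on this choice). For $d>0$, a family $\{y_g\}_{g\in G}\subset\Omega$ is a $d$-pseudotrajectory if $\mathrm{dist}(y_{sg},f_s(y_g))<d$ for all $s\in S$, $g\in G$. The action has the shadowing property if for every $\varepsilon>0$ there is $d>0$ such that for every $d$-pseudotrajectory $\{y_g\}_{g\in G}$ there is $x_e\in\Omega$ with $\mathrm{dist}(y_g,f_g(x_e))<\varepsilon$ for all $g\in G$. *)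

(* Defs.v *)
From Stdlib Require Import Reals.
From mathcomp Require Import all_boot.

Set Implicit Arguments.
Unset Strict Implicit.
Unset Printing Implicit Defensive.

(* A letter is a generator index i : 'I_k together with a sign:
   (i, true) = x_i, (i, false) = x_i^{-1}. *)
Definition letter (k : nat) : Type := ('I_k * bool)%type.

Definition linv (k : nat) (a : letter k) : letter k := (a.1, ~~ a.2).

Fixpoint reduced (k : nat) (w : seq (letter k)) : bool :=
  match w with
  | a :: ((b :: _) as w') => (b != linv a) && reduced w'
  | _ => true
  end.

Definition push (k : nat) (a : letter k) (w : seq (letter k)) : seq (letter k) :=
  match w with
  | [::] => [:: a]
  | b :: w' => if b == linv a then w' else a :: w
  end.

Lemma reduced_tail (k : nat) (b : letter k) (w : seq (letter k)) :
  reduced (b :: w) -> reduced w.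
Proof. by case: w => [|c w] //= /andP[]. Qed.

Lemma push_reduced (k : nat) (a : letter k) (w : seq (letter k)) :
  reduced w -> reduced (push a w).
Proof.
case: w => [|b w] //= Hw.
case: eqP => [_|/eqP Hb]; first exact: (reduced_tail Hw).
by rewrite /= Hb.
Qed.

Lemma foldr_push_reduced (k : nat) (u v : seq (letter k)) :
  reduced v -> reduced (foldr (@push k) v u).
Proof. by elim: u => [|a u IH] //= Hv; apply: push_reduced; apply: IH. Qed.

Record FreeGroup (k : nat) : Type :=
  FG { fg_word : seq (letter k); fg_red : reduced fg_word }.

Definition fg_one (k : nat) : FreeGroup k := @FG k [::] isT.

Definition fg_letter (k : nat) (a : letter k) : FreeGroup k := @FG k [:: a] isT.

Definition fg_mul (k : nat) (u v : FreeGroup k) : FreeGroup k :=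
  @FG k (foldr (@push k) (fg_word v) (fg_word u))
        (foldr_push_reduced (fg_word u) (fg_red v)).

Definition Rm (m : nat) : Type := 'I_m -> R.

Definition vadd (m : nat) (x y : Rm m) : Rm m := fun i => Rplus (x i) (y i).
Definition vscale (m : nat) (c : R) (x : Rm m) : Rm m := fun i => Rmult c (x i).

Definition euclid_dist (m : nat) (x y : Rm m) : R :=
  sqrt (\big[Rplus/R0]_(i < m) Rmult (Rminus (x i) (y i)) (Rminus (x i) (y i))).

Definition is_action (k m : nat) (Phi : FreeGroup k -> Rm m -> Rm m) : Prop :=
  (forall x, Phi (fg_one k) x = x) /\
  (forall g1 g2 x, Phi (fg_mul g1 g2) x = Phi g1 (Phi g2 x)).

Definition is_linear_map (m : nat) (f : Rm m -> Rm m) : Prop :=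
  (forall x y, f (vadd x y) = vadd (f x) (f y)) /\
  (forall c x, f (vscale c x) = vscale c (f x)).

Definition linear_action (k m : nat) (Phi : FreeGroup k -> Rm m -> Rm m) : Prop :=
  is_action Phi /\ (forall g, is_linear_map (Phi g)) /\
  (forall g, bijective (Phi g)).

Definition pseudotrajectory (k m : nat) (Phi : FreeGroup k -> Rm m -> Rm m)
    (d : R) (y : FreeGroup k -> Rm m) : Prop :=
  forall (s : letter k) (g : FreeGroup k),
    Rlt (euclid_dist (y (fg_mul (fg_letter s) g)) (Phi (fg_letter s) (y g))) d.

Definition shadowing_property (k m : nat) (Phi : FreeGroup k -> Rm m -> Rm m) : Prop :=
  forall eps : R, Rlt R0 eps ->
  exists d : R, Rlt R0 d /\
  forall y : FreeGroup k -> Rm m, pseudotrajectory Phi d y ->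
  exists x : Rm m, forall g : FreeGroup k, Rlt (euclid_dist (y g) (Phi g x)) eps.

(* Main.v *)
Require Import Defs.
From Stdlib Require Import Reals Lra Classical ClassicalEpsilon FunctionalExtensionality.
From HB Require Import structures.
From mathcomp Require Import all_boot all_algebra.
From mathcomp Require Import Rstruct zify.

Set Implicit Arguments.
Unset Strict Implicit.
Unset Printing Implicit Defensive.



Open Scope R_scope.

Notation rsum r F := (\big[Rplus/R0]_(j <- r) F j).

Lemma rsum_le (I : Type) (r : seq I) (F G : I -> R) :
  (forall j, F j <= G j) -> rsum r F <= rsum r G.
Proof.
move=> H; elim: r => [|x r IH]; rewrite ?big_nil ?big_cons; first lra.
by apply: Rplus_le_compat.
Qed.

Lemma rsum_abs (I : Type) (r : seq I) (F : I -> R) :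
  Rabs (rsum r F) <= rsum r (fun j => Rabs (F j)).
Proof.
elim: r => [|x r IH]; rewrite ?big_nil ?big_cons; first by rewrite Rabs_R0; lra.
by apply: Rle_trans (Rabs_triang _ _) _; apply: Rplus_le_compat_l.
Qed.

Lemma rsum_scal (I : Type) (r : seq I) (c : R) (F : I -> R) :
  rsum r (fun j => c * F j) = c * rsum r F.
Proof.
elim: r => [|x r IH]; rewrite ?big_nil ?big_cons; first ring.
rewrite IH; ring.
Qed.

Lemma rsum_const_le (n : nat) (F : 'I_n -> R) (B : R) :
  (forall j, F j <= B) -> \big[Rplus/R0]_(j < n) F j <= INR n * B.
Proof.
elim: n F => [|n IH] F H; first by rewrite big_ord0 /=; lra.
rewrite big_ord_recr S_INR Rmult_plus_distr_r Rmult_1_l.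
apply: Rplus_le_compat; last exact: H.
exact: IH.
Qed.

Lemma rsum_ge0 (I : Type) (r : seq I) (F : I -> R) :
  (forall j, 0 <= F j) -> 0 <= rsum r F.
Proof.
move=> H; elim: r => [|x r IH]; rewrite ?big_nil ?big_cons; first lra.
have := H x; lra.
Qed.

Lemma term_le_sum (n : nat) (F : 'I_n -> R) (i : 'I_n) :
  (forall j, 0 <= F j) -> F i <= \big[Rplus/R0]_(j < n) F j.
Proof.
move=> H; rewrite (bigD1 i) //=.
have : 0 <= \big[Rplus/R0]_(j < n | j != i) F j.
  rewrite big_mkcond /=; apply: rsum_ge0 => j; case: ifP => _ //; lra.
move=> h; rewrite -{1}[F i]Rplus_0_r; apply: Rplus_le_compat_l; exact: h.
Qed.

Definition vzero {m : nat} : Rm m := fun _ => R0.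

Lemma lin_zero (m : nat) (f : Rm m -> Rm m) :
  is_linear_map f -> f ((vzero : Rm m)) = (vzero : Rm m).
Proof.
case=> _ hs.
have -> : (vzero : Rm m) = vscale R0 ((vzero : Rm m)).
  by apply: functional_extensionality => i; rewrite /vscale /vzero Rmult_0_l.
by rewrite hs; apply: functional_extensionality => i; rewrite /vscale !Rmult_0_l.
Qed.

Lemma lin_sum (m : nat) (f : Rm m -> Rm m) (I : Type) (r : seq I) (c : I -> R) (v : I -> Rm m) :
  is_linear_map f ->
  f (fun i => rsum r (fun j => c j * v j i)) = fun i => rsum r (fun j => c j * f (v j) i).
Proof.
move=> hf; elim: r => [|x r IH].
  have -> : (fun i : 'I_m => rsum [::] (fun j => c j * v j i)) = (vzero : Rm m).
    by apply: functional_extensionality => i; rewrite big_nil.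
  rewrite lin_zero //; apply: functional_extensionality => i; rewrite big_nil //.
have -> : (fun i : 'I_m => rsum (x :: r) (fun j => c j * v j i)) =
   vadd (vscale (c x) (v x)) (fun i => rsum r (fun j => c j * v j i)).
  by apply: functional_extensionality => i; rewrite big_cons.
case: hf => ha hs; rewrite ha hs IH.
by apply: functional_extensionality => i; rewrite big_cons.
Qed.

Lemma coord_le_dist (m : nat) (u v : Rm m) (i : 'I_m) :
  Rabs (u i - v i) <= euclid_dist u v.
Proof.
rewrite /euclid_dist -sqrt_Rsqr_abs; apply: sqrt_le_1_alt.
rewrite /Rsqr; apply: (term_le_sum (F := fun j => (u j - v j) * (u j - v j))).
move=> j; apply: Rle_0_sqr.
Qed.

Lemma dist_le (m : nat) (u v : Rm m) (B : R) :
  (forall i, Rabs (u i - v i) <= B) -> euclid_dist u v <= sqrt (INR m * (B * B)).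
Proof.
move=> H; rewrite /euclid_dist; apply: sqrt_le_1_alt.
apply: rsum_const_le => j.
have := H j; have := Rabs_pos (u j - v j) => h0 h1.
have -> : (u j - v j) * (u j - v j) = Rabs (u j - v j) * Rabs (u j - v j).
  by rewrite -Rabs_mult Rabs_right //; apply: Rle_ge; apply: Rle_0_sqr.
by apply: Rmult_le_compat.
Qed.

Definition errb (k m : nat) (Phi : FreeGroup k -> Rm m -> Rm m) (y : FreeGroup k -> Rm m) (B : R) :=
  forall s g i, Rabs (y (fg_mul (fg_letter s) g) i - Phi (fg_letter s) (y g) i) <= B.

Lemma shadow_bnd (k m : nat) (Phi : FreeGroup k -> Rm m -> Rm m) :
  linear_action Phi -> shadowing_property Phi ->
  forall y B, errb Phi y B -> exists x K, forall g i, Rabs (y g i - Phi g x i) <= K.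
Proof.
move=> [_ [hlin _]] hsh y B hB.
have [d [hd hpt]] := hsh 1 Rlt_0_1.
set B' := Rabs B + 1.
have hB' : 0 < B' by have := Rabs_pos B; rewrite /B'; lra.
have hm0 : 0 < INR m + 1 by have := pos_INR m; lra.
set t := d / (B' * (INR m + 1)).
have ht : 0 < t by apply: Rdiv_lt_0_compat; [lra | apply: Rmult_lt_0_compat; lra].
have htB : t * B' = d / (INR m + 1) by rewrite /t; field; lra.
have hP : pseudotrajectory Phi d (fun g => vscale t (y g)).
move=> s g.
case: (hlin (fg_letter s)) => _ hs; rewrite hs.
apply: Rle_lt_trans (dist_le (B := t * B') _) _.
  move=> i; rewrite /vscale -Rmult_minus_distr_l Rabs_mult Rabs_right; last lra.
  apply: Rmult_le_compat_l; first lra.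
  have := hB s g i; rewrite /B'; have := Rle_abs B; lra.
rewrite htB; apply: (Rlt_le_trans _ (sqrt (d * d))); last by rewrite sqrt_square; lra.
apply: sqrt_lt_1_alt; split.
  apply: Rmult_le_pos; first exact: pos_INR.
  apply: Rle_0_sqr.
set q := d / (INR m + 1).
have hq : 0 < q by apply: Rdiv_lt_0_compat; lra.
have -> : d = q * (INR m + 1) by rewrite /q; field; lra.
have := pos_INR m => hm.
have : 0 < q * q by apply: Rmult_lt_0_compat.
nra.

have [x hx] := hpt _ hP.
  exists (vscale (/ t) x), (/ t) => g i.
  have h1 := coord_le_dist (vscale t (y g)) (Phi g x) i.
  have h2 := hx g.
  case: (hlin g) => _ hs; rewrite hs /vscale.
  rewrite /vscale in h1.
  have -> : y g i - / t * Phi g x i = / t * (t * y g i - Phi g x i) by field; lra.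
  rewrite Rabs_mult Rabs_right; last by apply: Rle_ge; apply: Rlt_le; apply: Rinv_0_lt_compat.
  rewrite -{2}[/ t]Rmult_1_r; apply: Rmult_le_compat_l; first by apply: Rlt_le; apply: Rinv_0_lt_compat.
  rewrite /vscale in h2; lra.
Qed.

Lemma fg_eq (k : nat) (u v : FreeGroup k) : fg_word u = fg_word v -> u = v.
Proof.
case: u => w r; case: v => w' r' /= e; subst w'; f_equal; apply: bool_irrelevance.
Qed.

Definition PW (k m : nat) (Phi : FreeGroup k -> Rm m -> Rm m) (w : seq (letter k)) (x : Rm m) : Rm m :=
  foldr (fun a v => Phi (fg_letter a) v) x w.

Lemma PW_cat (k m : nat) (Phi : FreeGroup k -> Rm m -> Rm m) w1 w2 x :
  PW Phi (w1 ++ w2) x = PW Phi w1 (PW Phi w2 x).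
Proof. by rewrite /PW foldr_cat. Qed.

Lemma push_red (k : nat) (a : letter k) w : reduced (a :: w) -> push a w = a :: w.
Proof. by case: w => [|b w] //= /andP [h _]; rewrite (negbTE h). Qed.

Lemma Phi_word (k m : nat) (Phi : FreeGroup k -> Rm m -> Rm m) :
  is_action Phi -> forall g x, Phi g x = PW Phi (fg_word g) x.
Proof.
move=> [h1 h2] [w r] /=; elim: w r => [|a w IH] r x /=.
  by have -> : FG r = fg_one k by apply: fg_eq.
have -> : FG r = fg_mul (fg_letter a) (FG (reduced_tail r)).
  by apply: fg_eq; rewrite /= push_red.
by rewrite h2 IH.
Qed.

Definition gof (k : nat) (w : seq (letter k)) : FreeGroup k :=
  foldr (fun a g => fg_mul (fg_letter a) g) (fg_one k) w.

Lemma PW_gof (k m : nat) (Phi : FreeGroup k -> Rm m -> Rm m) :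
  is_action Phi -> forall w x, PW Phi w x = Phi (gof w) x.
Proof.
move=> [h1 h2]; elim=> [|a w IH] x /=; first by rewrite h1.
by rewrite IH h2.
Qed.

Lemma linvK (k : nat) (s : letter k) : linv (linv s) = s.
Proof. by case: s => i b; rewrite /linv /= negbK. Qed.

Lemma neq_linv (k : nat) (t : letter k) : t != linv t.
Proof. by case: t => i b; rewrite /linv /=; apply/eqP => [[]]; case: b. Qed.

Lemma letter_inv (k m : nat) (Phi : FreeGroup k -> Rm m -> Rm m) :
  is_action Phi -> forall s x, Phi (fg_letter s) (Phi (fg_letter (linv s)) x) = x.
Proof.
move=> [h1 h2] s x; rewrite -h2.
have -> : fg_mul (fg_letter s) (fg_letter (linv s)) = fg_one k by apply: fg_eq; rewrite /= eqxx.
by rewrite h1.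
Qed.

Lemma PW_inv (k m : nat) (Phi : FreeGroup k -> Rm m -> Rm m) :
  is_action Phi -> forall w x, PW Phi (rev (map (@linv k) w)) (PW Phi w x) = x.
Proof.
move=> ha; elim=> [|a w IH] x //=.
rewrite rev_cons -cats1 PW_cat /=.
have -> : Phi (fg_letter (linv a)) (Phi (fg_letter a) (PW Phi w x)) = PW Phi w x.
  by have := letter_inv ha (linv a) (PW Phi w x); rewrite linvK.
exact: IH.
Qed.

Lemma red_rcons (k : nat) (s : letter k) w :
  reduced w -> last s w != linv s -> reduced (w ++ [:: s]).
Proof.
elim: w => [|x w IH] //= hr hl.
case: w IH hr hl => [|y w] IH /= hr hl.
  rewrite andbT; apply/negP => /eqP e; move: hl; by rewrite e linvK eqxx.
move/andP: hr => [hxy hr]; rewrite hxy /=; exact: IH.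
Qed.

Lemma red_cat (k : nat) (s : letter k) w l :
  reduced (w ++ [:: s]) -> reduced (s :: l) -> reduced (w ++ s :: l).
Proof.
elim: w => [|x w IH] //= h1 h2.
case: w IH h1 => [|y w] IH /= h1.
  by move: h1 => /andP [-> _].
by move/andP: h1 => [-> h1]; rewrite /=; apply: IH.
Qed.

Lemma red_nseq (k : nat) (t : letter k) n : reduced (nseq n t).
Proof.
elim: n => [|n IH] //=; case: n IH => [|n] //= IH.
rewrite IH andbT; apply/eqP => e; have := neq_linv t; rewrite -{1}e eqxx; done.
Qed.

Lemma red_cons_nseq (k : nat) (s t : letter k) n :
  t != linv s -> reduced (s :: nseq n t).
Proof.
move=> h; case: n => [|n] //=; rewrite h /=; exact: (red_nseq t n.+1).
Qed.

Lemma size_push (k : nat) (s : letter k) w :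
  (size (push s w) = (size w).+1 \/ size (push s w) = (size w).-1)%N.
Proof. case: w => [|b w] /=; first by left. case: ifP => _ /=; by [right | left]. Qed.

Definition ebasis {m : nat} (j : 'I_m) : Rm m := fun i => if j == i then 1 else 0.

Lemma basis_decomp (m : nat) (q : Rm m) :
  q = fun i => \big[Rplus/R0]_(j < m) (q j * ebasis j i).
Proof.
apply: functional_extensionality => i.
rewrite (bigD1 i) //= big1; first by rewrite /ebasis eqxx; ring.
by move=> j /negbTE hj; rewrite /ebasis hj; ring.
Qed.

Lemma op_bound (k m : nat) (Phi : FreeGroup k -> Rm m -> Rm m) (Kf : 'I_m -> R) :
  (forall g, is_linear_map (Phi g)) ->
  (forall j g i, Rabs (Phi g (ebasis j) i) <= Kf j) ->
  forall g q Q i, (forall i, Rabs (q i) <= Q) ->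
  Rabs (Phi g q i) <= Q * \big[Rplus/R0]_(j < m) Kf j.
Proof.
move=> hlin hK g q Q i hq.
rewrite [q]basis_decomp lin_sum //.
apply: Rle_trans (rsum_abs _ _) _.
rewrite -rsum_scal; apply: rsum_le => j.
rewrite Rabs_mult; apply: Rmult_le_compat => //; try apply: Rabs_pos.
Qed.

Lemma INR_step (a b : nat) : (a = b.+1 \/ a = b.-1)%N -> Rabs (INR a - INR b) <= 1.
Proof.
case=> ->.
  rewrite S_INR; have -> : INR b + 1 - INR b = 1 by ring.
  rewrite Rabs_R1; lra.
case: b => [|b]; first by rewrite /= Rminus_diag Rabs_R0; lra.
rewrite [(b.+1).-1]/=.
rewrite S_INR; have -> : INR b - (INR b + 1) = - 1 by ring.
rewrite Rabs_Ropp Rabs_R1; lra.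
Qed.

Lemma caseA (k m : nat) (hk : (2 <= k)%N) (hm : (1 <= m)%N)
    (Phi : FreeGroup k -> Rm m -> Rm m) :
  linear_action Phi -> (forall u, exists K, forall g i, Rabs (Phi g u i) <= K) ->
  ~ shadowing_property Phi.
Proof.
move=> hL hbnd hsh.
have hL' := hL; case: hL' => ha [hlin _].
have Kfs : forall j : 'I_m, {K | forall g i, Rabs (Phi g (ebasis j) i) <= K}.
  move=> j; apply: constructive_indefinite_description; exact: hbnd.
pose Kf j := proj1_sig (Kfs j).
have hKf : forall j g i, Rabs (Phi g (ebasis j) i) <= Kf j by move=> j; exact: (proj2_sig (Kfs j)).
pose L := \big[Rplus/R0]_(j < m) Kf j.
pose i0 : 'I_m := Ordinal hm.
pose v : Rm m := ebasis i0.
pose y g : Rm m := vscale (INR (size (fg_word g))) (Phi g v).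
have hy : errb Phi y (1 * Kf i0).
  move=> s g i; rewrite /y.
  case: (hlin (fg_letter s)) => _ hs; rewrite hs /vscale -(proj2 ha).
  set ww := fg_mul _ _.
  rewrite -Rmult_minus_distr_r Rabs_mult.
  apply: Rmult_le_compat; try apply: Rabs_pos; last exact: hKf.
  apply: INR_step; rewrite /ww /=; exact: size_push.
have [x [K hx]] := shadow_bnd hL hsh hy.
have hk0 : (0 < k)%N by apply: leq_trans hk.
pose a0 : letter k := (Ordinal hk0, true).
have hn : forall n : nat, INR n <= K * L + Rabs (x i0).
  move=> n.
  pose g := @FG k (nseq n a0) (red_nseq a0 n).
  pose z : Rm m := fun i => INR n * v i - x i.
  have hz : Phi g z = fun i => y g i - Phi g x i.
    have -> : z = vadd (vscale (INR n) v) (vscale (-1) x).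
      by apply: functional_extensionality => i; rewrite /z /vadd /vscale; ring.
    case: (hlin g) => hA hS; rewrite hA !hS.
    apply: functional_extensionality => i; rewrite /vadd /y /= size_nseq /vscale; ring.
  have hzb : Rabs (z i0) <= K * L.
    have -> : z = PW Phi (rev (map (@linv k) (fg_word g))) (PW Phi (fg_word g) z).
      by rewrite PW_inv.
    rewrite -Phi_word // hz PW_gof //.
    by apply: op_bound => // i; exact: hx.
  move: hzb; rewrite /z /v /ebasis eqxx Rmult_1_r => hzb.
  have := Rabs_triang (INR n - x i0) (x i0).
  have -> : INR n - x i0 + x i0 = INR n by ring.
  rewrite Rabs_right; last by apply: Rle_ge; apply: pos_INR.
  lra.
have [n hn'] := INR_unbounded (K * L + Rabs (x i0)).
have := hn n; lra.
Qed.

Lemma suffix_consE (T : eqType) (h : seq T) x w :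
  suffix h (x :: w) = (h == x :: w) || suffix h w.
Proof.
apply/idP/idP.
  move/suffixP => [r e]; case: r e => [|y r] /= e; first by rewrite e eqxx.
  by apply/orP; right; case: e => _ ->; exact: suffix_suffix.
case/orP => [/eqP -> | h1]; first exact: suffix_refl.
apply: suffix_trans h1 _; exact: suffix_cons.
Qed.

Lemma suffix_shorter (T : eqType) (a b W : seq T) :
  suffix a W -> suffix b W -> (size a <= size b)%N -> suffix a b.
Proof.
move=> ha hb hs.
have hbW := size_suffix hb.
move: ha hb; rewrite !suffixE => /eqP ea /eqP eb.
apply/eqP; rewrite -{2}ea -eb drop_drop; congr drop.
rewrite size_drop; lia.
Qed.

Lemma no_suffix (k : nat) (s t : letter k) (i j : nat) :
  s != t -> (i < j)%N -> ~~ suffix (s :: nseq i.+1 t) (s :: nseq j.+1 t).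
Proof.
move=> hst hij; rewrite suffix_consE; apply/norP; split.
  apply/eqP => e; have := congr1 size e; rewrite /= !size_nseq => [[]] e'.
  by move: hij; rewrite e' ltnn.
apply/negP => /suffixP [r e].
have : s \in nseq j.+1 t by rewrite e mem_cat mem_head orbT.
by rewrite mem_nseq /= (negbTE hst).
Qed.

Lemma rsum_sub (I : Type) (r : seq I) (c a b : I -> R) :
  rsum r (fun j => c j * (a j - b j)) = rsum r (fun j => c j * a j) - rsum r (fun j => c j * b j).
Proof.
elim: r => [|x r IH]; rewrite ?big_nil ?big_cons; first ring.
rewrite IH; ring.
Qed.


Definition Yw (k m : nat) (Phi : FreeGroup k -> Rm m -> Rm m) (u : Rm m) (h w : seq (letter k)) : Rm m :=
  if suffix h w then PW Phi (take (size w - size h) w) u else vzero.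

Lemma Yw_err (k m : nat) (Phi : FreeGroup k -> Rm m -> Rm m) (u : Rm m) (s : letter k) (l : seq (letter k)) :
  linear_action Phi ->
  forall sg w i,
  Rabs (Yw Phi u (s :: l) (push sg w) i - Phi (fg_letter sg) (Yw Phi u (s :: l) w) i)
    <= Rabs (u i) + Rabs (Phi (fg_letter (linv s)) u i).
Proof.
move=> [ha [hlin _]] sg w i.
set h := s :: l.
have hb0 : 0 <= Rabs (u i) + Rabs (Phi (fg_letter (linv s)) u i).
  by have := Rabs_pos (u i); have := Rabs_pos (Phi (fg_letter (linv s)) u i); lra.
have z0 : Phi (fg_letter sg) vzero = vzero by apply: lin_zero.
have out : forall w, Rabs (Yw Phi u h (sg :: w) i - Phi (fg_letter sg) (Yw Phi u h w) i)
    <= Rabs (u i) + Rabs (Phi (fg_letter (linv s)) u i).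
  move=> w0; rewrite /Yw suffix_consE.
  case E1: (suffix h w0); rewrite ?orbT ?orbF.
    rewrite /= subSn; last exact: size_suffix E1.
    by rewrite /= Rminus_diag Rabs_R0.
  case E2: (h == sg :: w0).
    move/eqP: E2 => E2; rewrite {1}E2 subnn /= z0 /vzero Rminus_0_r.
    by have := Rabs_pos (Phi (fg_letter (linv s)) u i); lra.
  by rewrite z0 /vzero Rminus_0_r Rabs_R0.
have inw : forall w', Rabs (Yw Phi u h w' i - Phi (fg_letter sg) (Yw Phi u h (linv sg :: w')) i)
    <= Rabs (u i) + Rabs (Phi (fg_letter (linv s)) u i).
  move=> w0; rewrite /Yw suffix_consE.
  case E1: (suffix h w0); rewrite ?orbT ?orbF.
    rewrite /= subSn; last exact: size_suffix E1.
    by rewrite /= (letter_inv ha) Rminus_diag Rabs_R0.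
  case E2: (h == linv sg :: w0).
    move/eqP: E2 => E2; rewrite E2 subnn /=.
    have -> : sg = linv s by case: E2 => -> _; rewrite linvK.
    rewrite /vzero Rminus_0_l Rabs_Ropp.
    by have := Rabs_pos (u i); lra.
  by rewrite z0 /vzero Rminus_0_r Rabs_R0.
case: w => [|b w'] /=; first exact: out.
case: ifP => [/eqP e | _]; last exact: out.
by rewrite e; exact: inw.
Qed.

Lemma dep (m : nat) (X : 'I_m.+1 -> 'I_m -> R) :
  exists c : 'I_m.+1 -> R, (exists j, c j <> R0) /\
   forall i, \big[Rplus/R0]_(j < m.+1) Rmult (c j) (X j i) = R0.
Proof.
pose A : 'M[R]_(m.+1, m) := (\matrix_(j, i) X j i)%R.
have nf : ~~ row_free A.
  rewrite /row_free; apply/negP => /eqP h.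
  by have := rank_leq_col A; rewrite h ltnn.
have : (kermx A != 0)%R by rewrite kermx_eq0.
move=> nz.
have [i [j Hij]] : exists i j, (kermx A) i j <> 0%R.
  apply: NNPP => H; move/eqP: nz; apply; apply/matrixP => i j.
  rewrite [RHS]mxE; apply: NNPP => H2; apply: H; exists i, j; exact: H2.
exists (fun j => kermx A i j); split; first by exists j.
move=> l.
have := congr1 (fun M : 'M[R]_(m.+1, m) => M i l) (mulmx_ker A).
rewrite !mxE => H; transitivity (0%R : R); last by []. rewrite -H.
apply: eq_bigr => p _; have -> : A p l = X p l by rewrite /A mxE. by [].
Qed.

Lemma caseB (k m : nat) (Phi : FreeGroup k -> Rm m -> Rm m) (s t : letter k)
    (hst : s != t) (hts : t != linv s) (u : Rm m) :
  linear_action Phi ->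
  (forall K, exists w, reduced (w ++ [:: s]) /\ exists i, K < Rabs (PW Phi w u i)) ->
  ~ shadowing_property Phi.
Proof.
move=> hL hu hsh.
have hL' := hL; case: hL' => ha [hlin _].
pose hw (j : nat) : seq (letter k) := s :: nseq j.+1 t.
pose yj (j : 'I_m.+1) (g : FreeGroup k) : Rm m := Yw Phi u (hw j) (fg_word g).
pose B := \big[Rplus/R0]_(i < m) (Rabs (u i) + Rabs (Phi (fg_letter (linv s)) u i)).
have herr : forall j, errb Phi (yj j) B.
  move=> j sg g i; rewrite /yj /hw /=.
  apply: Rle_trans (@Yw_err k m Phi u s (nseq j.+1 t) hL sg (fg_word g) i) _.
  apply: (term_le_sum (F := fun i => Rabs (u i) + Rabs (Phi (fg_letter (linv s)) u i))).
  by move=> i'; have := Rabs_pos (u i'); have := Rabs_pos (Phi (fg_letter (linv s)) u i'); lra.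
have Xs : forall j : 'I_m.+1, {x | exists K, forall g i, Rabs (yj j g i - Phi g x i) <= K}.
  move=> j; apply: constructive_indefinite_description; apply: (shadow_bnd hL hsh); exact: herr j.
pose X j := proj1_sig (Xs j).
have Ks : forall j : 'I_m.+1, {K | forall g i, Rabs (yj j g i - Phi g (X j) i) <= K}.
  move=> j; apply: constructive_indefinite_description; exact: (proj2_sig (Xs j)).
pose Kj j := proj1_sig (Ks j).
have hKj : forall j g i, Rabs (yj j g i - Phi g (X j) i) <= Kj j.
  move=> j; exact: (proj2_sig (Ks j)).
have [c [[j0 hc0] hcX]] := dep X.
pose M := \big[Rplus/R0]_(j < m.+1) (Rabs (c j) * Kj j).
have hc0' : 0 < Rabs (c j0) by apply: Rabs_pos_lt.
have [w [hwr [i hi]]] := hu (M / Rabs (c j0)).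
have hgr : reduced (w ++ hw j0) by apply: red_cat hwr (red_cons_nseq _ hts).
pose g := @FG k (w ++ hw j0) hgr.
have hyg : forall j, yj j g = if j == j0 then PW Phi w u else vzero.
  move=> j; rewrite /yj /Yw /=.
  case: eqP => [-> | hne].
    by rewrite suffix_suffix size_cat addnK take_size_cat.
  have -> : suffix (hw j) (w ++ hw j0) = false; last by [].
  apply/negP => hs1.
  have hs0 : suffix (hw j0) (w ++ hw j0) := suffix_suffix _ _.
  have : (nat_of_ord j != nat_of_ord j0) by apply/eqP => e; apply: hne; apply: val_inj.
  case: (ltngtP j j0) => // hlt _.
    have := no_suffix hst hlt; rewrite (suffix_shorter hs1 hs0) //.
    by rewrite /hw /= !size_nseq; apply: ltnW.
  have := no_suffix hst hlt; rewrite (suffix_shorter hs0 hs1) //.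
  by rewrite /hw /= !size_nseq; apply: ltnW.
have key : c j0 * PW Phi w u i =
    \big[Rplus/R0]_(j < m.+1) (c j * (yj j g i - Phi g (X j) i)).
  rewrite rsum_sub.
  have -> : \big[Rplus/R0]_(j < m.+1) (c j * Phi g (X j) i) = 0.
    have := lin_sum (index_enum 'I_m.+1) c X (hlin g).
    move/(congr1 (fun f => f i)) => /= <-.
    have -> : (fun i0 => \big[Rplus/R0]_(j <- index_enum 'I_m.+1) (c j * X j i0)) = vzero.
      by apply: functional_extensionality => i0; exact: hcX.
    by rewrite lin_zero.
  rewrite Rminus_0_r (bigD1 j0) //= big1.
    by rewrite hyg eqxx Rplus_0_r.
  by move=> j /negbTE hj; rewrite hyg hj /vzero Rmult_0_r.
have hle : Rabs (c j0) * Rabs (PW Phi w u i) <= M.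
  rewrite -Rabs_mult key; apply: Rle_trans (rsum_abs _ _) _.
  apply: rsum_le => j; rewrite Rabs_mult; apply: Rmult_le_compat_l; first exact: Rabs_pos.
  exact: hKj.
have : M / Rabs (c j0) * Rabs (c j0) < Rabs (PW Phi w u i) * Rabs (c j0).
  by apply: Rmult_lt_compat_r.
have -> : M / Rabs (c j0) * Rabs (c j0) = M by field; lra.
lra.
Qed.

Theorem theorem3 (k m : nat) (hk : (2 <= k)%N) (hm : (1 <= m)%N)
    (Phi : FreeGroup k -> Rm m -> Rm m) :
  linear_action Phi -> ~ shadowing_property Phi.
Proof.
move=> hL hsh.
have hL' := hL; case: hL' => ha [hlin _].
have hk0 : (0 < k)%N by apply: leq_trans hk.
have hk1 : (1 < k)%N by [].
pose a0 : letter k := (Ordinal hk0, true).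
pose b0 : letter k := (Ordinal hk1, true).
have hab : a0 != b0 by [].
have hba : b0 != a0 by [].
have hbla : b0 != linv a0 by [].
have halb : a0 != linv b0 by [].
case: (classic (exists u, forall K, exists w, reduced (w ++ [:: a0]) /\
          exists i, K < Rabs (PW Phi w u i))) => [[u hu] | nA].
  exact: (caseB hab hbla hL hu hsh).
case: (classic (exists u, forall K, exists w, reduced (w ++ [:: b0]) /\
          exists i, K < Rabs (PW Phi w u i))) => [[u hu] | nB].
  exact: (caseB hba halb hL hu hsh).
apply: (caseA hk hm hL _ hsh) => u.
have bA : exists K, forall w, reduced (w ++ [:: a0]) -> forall i, Rabs (PW Phi w u i) <= K.
  apply: NNPP => H; apply: nA; exists u; move=> K1; apply: NNPP => H2; apply: H.
  exists K1 => w hw i; apply: Rnot_lt_le => hlt; apply: H2; exists w; split => //; exists i; exact: hlt.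
have bB : exists K, forall w, reduced (w ++ [:: b0]) -> forall i, Rabs (PW Phi w u i) <= K.
  apply: NNPP => Hb; apply: nB; exists u; move=> Kb; apply: NNPP => Hb2; apply: Hb.
  exists Kb => w hw i; apply: Rnot_lt_le => hlt; apply: Hb2; exists w; split => //; exists i; exact: hlt.
case: bA => KA hKA; case: bB => KB hKB.
exists (Rmax KA KB) => g i.
rewrite (Phi_word ha).
have : reduced (fg_word g ++ [:: a0]) || reduced (fg_word g ++ [:: b0]).
  case: g => w r /=.
  case E: (last a0 w == linv a0); last by rewrite (red_rcons r (negbT E)).
  apply/orP; right; move: (red_rcons (s:=b0) r); apply.
  case: w r E => [|b w'] r E.
    by move: E; rewrite /= (negbTE (neq_linv a0)).
  move: E; rewrite /= => /eqP ->; apply/eqP => e.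
  by have := congr1 (@linv k) e; rewrite !linvK => e'; move: hab; rewrite e' eqxx.
case/orP => hr.
  by apply: Rle_trans (hKA _ hr i) _; apply: Rmax_l.
by apply: Rle_trans (hKB _ hr i) _; apply: Rmax_r.
Qed.
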